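(* Let $Q$ and $W$ satisfy the standing assumptions with $W=Y$, and let $l\ge1$. If $Q$ is domino consistent, then $\hat Q^{l\triangledown}$ realizes the strongest asynchronous $l$-complete approximation, i.e. $\mathcal B(\hat Q^{l\triangledown})=\hat{\mathcal B}^l$.
   Context: Strings and signals: $\diamond$ is a symbol not in any other set considered. For a set $A$ and $l\in\mathbb N_0$, $A^l$ is the set of strings of length $l$ over $A$, indexed $\zeta=\zeta(0)\cdots\zeta(l-1)$. For a map $w$ on $\mathbb Z$ (or a string) and integers $t_1\le t_2$, $w|_{[t_1,t_2]}=w(t_1)\cdots w(t_2)$ is the string of length $t_2-t_1+1$ (absolute time forgotten). For a set $\mathcal S$ of such maps, $\mathcal S|_{[t_1,t_2]}=\{s|_{[t_1,t_2]}:s\in\mathcal S\}$. State machines: a state machine is $Q=(X,U,Y,\delta,X_0)$ with $X_0\subseteq X$, $\delta\subseteq X\times U\times Y\times X$. Let $H_\delta(x)=\{y:\exists u,x'.\,(x,u,y,x')\in\delta\}$, $F_\delta(x,u)=\{x':\exists y\in H_\delta(x).\,(x,u,y,x')\in\delta\}$. The full behavior $\mathcal B_f(Q)$ is the set of $(\mu,\nu,\xi)\in(U\times Y\times X)^{\mathbb N_0}$ with $\xi(0)\in X_0$ and $(\xi(k),\mu(k),\nu(k),\xi(k+1))\in\delta$ for all $k\in\mathbb N_0$. $Q$ is live and reachable if every $x\in X_0$ is $\xi(0)$ for some $(\mu,\nu,\xi)\in\mathcal B_f(Q)$ and every $x\in X$ is $\xi(k)$ for some such trajectory and some $k$. Standing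 assumptions: $Q=(X,U,Y,\delta,X_0)$ is live and reachable and satisfies $(x,u,y,x')\in\delta\iff(x'\in F_\delta(x,u)\wedge y\in H_\delta(x))$ for all $x,x'\in X,u\in U,y\in Y$; the external signal space $W$ is finite and either $W=U\times Y$ or $W=Y$ (here $W=Y$). Behaviors: for a state machine $Q'$ with input set $U$ and output set $Y$, $\mathcal B(Q')$ is the set of $w:\mathbb Z\to Y\cup\{\diamond\}$ such that for some $(\mu,\nu,\xi)\in\mathcal B_f(Q')$, $w(k)=\diamond$ for $k<0$ and $w(k)=\nu(k)$ for $k\ge0$. $\mathcal B_S(Q)$ is the set of pairs $(w,\xi)$ of maps on $\mathbb Z$ with $w(k)=\xi(k)=\diamond$ for $k<0$ and $(w(k),\xi(k))=(\nu(k),\xi'(k))$ for $k\ge0$, for some $(\mu,\nu,\xi')\in\mathcal B_f(Q)$. For a set $\mathcal B$ of maps on $\mathbb Z$, $\Pi_l(\mathcal B)=\bigcup_{k\in\mathbb N_0}\mathcal B|_{[k-l+1,k]}$. SAlCA: for $l\in\mathbb N_0$, $\hat{\mathcal B}^l$ is the set of $w:\mathbb Z\to W\cup\{\diamond\}$ with $w(k)=\diamond$ for $k<0$, $w(k)\in W$ for $k\ge0$, $w|_{[-l,0]}\in\mathcal B(Q)|_{[-l,0]}$ and $w|_{[k-l,k]}\in\Pi_{l+1}(\mathcal B(Q))$ for all $k\in\mathbb N_0$. Corresponding strings: for integers $a,b$ and $x\in X$, $E^{[a,b]}(x)=\{\zeta:\exists(w,\xi)\in\mathcal B_S(Q),k\in\mathbb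 N_0:\ \xi(k)=x,\ \zeta=w|_{[k+a,k+b]}\}$; $I^l_l=[0,l-1]$. Quotient state machine (for $W=Y$): $\hat Q^{l\triangledown}=(\hat X^{l\triangledown},U,Y,\hat\delta^{l\triangledown},\hat X^{l\triangledown}_0)$ with $\hat X^{l\triangledown}=\{E^{I^l_l}(x):x\in X\}$ (a set of subsets of $Y^l$), $\hat X^{l\triangledown}_0=\{E^{I^l_l}(x):x\in X_0\}$, and $(\hat x,u,y,\hat x')\in\hat\delta^{l\triangledown}$ iff there exist $x,x'\in X$ with $\hat x=E^{I^l_l}(x)$, $\hat x'=E^{I^l_l}(x')$ and $(x,u,y,x')\in\delta$. Domino consistency (for $W=Y$): $Q$ is domino consistent if for all $\zeta\in\Pi_{l+1}(\mathcal B(Q))$ and all $\hat y\in\hat X^{l\triangledown}$ with $\zeta|_{[0,l-1]}\in\hat y$ there exists $x\in X$ with $E^{I^l_l}(x)=\hat y$ and $\zeta\in E^{[0,l]}(x)$. *)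

(* Defs.v *)
From Stdlib Require Import ZArith List.
Import ListNotations.
Open Scope Z_scope.

(* The symbol diamond is modelled by [None]; a value y is [Some y].
   A signal is a map  Z -> option Y ; a string is a list (option Y). *)

(* w|_[t1,t2] : string of length t2-t1+1 (empty if t2 < t1). *)
Definition restr {A : Type} (w : Z -> A) (t1 t2 : Z) : list A :=
  map (fun i => w (t1 + Z.of_nat i)) (seq 0 (Z.to_nat (t2 - t1 + 1))).

Section SM.
Context {X U Y : Type}.

Definition Hd (delta : X -> U -> Y -> X -> Prop) (x : X) (y : Y) : Prop :=
  exists u x', delta x u y x'.
Definition Fd (delta : X -> U -> Y -> X -> Prop) (x : X) (u : U) (x' : X) : Prop :=
  exists y, Hd delta x y /\ delta x u y x'.

Definition full_behavior (X0 : X -> Prop) (delta : X -> U -> Y -> X -> Prop)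
  (mu : nat -> U) (nu : nat -> Y) (xi : nat -> X) : Prop :=
  X0 (xi O) /\ forall k : nat, delta (xi k) (mu k) (nu k) (xi (S k)).

Definition live_reachable (X0 : X -> Prop) (delta : X -> U -> Y -> X -> Prop) : Prop :=
  (forall x, X0 x -> exists mu nu xi, full_behavior X0 delta mu nu xi /\ xi O = x) /\
  (forall x, exists mu nu xi k, full_behavior X0 delta mu nu xi /\ xi k = x).

Definition standing_delta (delta : X -> U -> Y -> X -> Prop) : Prop :=
  forall x u y x', delta x u y x' <-> (Fd delta x u x' /\ Hd delta x y).

Definition behavior (X0 : X -> Prop) (delta : X -> U -> Y -> X -> Prop)
  (w : Z -> option Y) : Prop :=
  exists mu nu xi, full_behavior X0 delta mu nu xi /\
    forall k : Z, (k < 0 -> w k = None) /\ (0 <= k -> w k = Some (nu (Z.to_nat k))).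

Definition behavior_S (X0 : X -> Prop) (delta : X -> U -> Y -> X -> Prop)
  (w : Z -> option Y) (xs : Z -> option X) : Prop :=
  exists mu nu xi, full_behavior X0 delta mu nu xi /\
    forall k : Z, (k < 0 -> w k = None /\ xs k = None) /\
                  (0 <= k -> w k = Some (nu (Z.to_nat k)) /\ xs k = Some (xi (Z.to_nat k))).

End SM.

Definition Pi {Y : Type} (l : nat) (B : (Z -> option Y) -> Prop)
  (zeta : list (option Y)) : Prop :=
  exists (w : Z -> option Y) (k : nat), B w /\
    zeta = restr w (Z.of_nat k - Z.of_nat l + 1) (Z.of_nat k).

Definition SAlCA {X U Y : Type} (X0 : X -> Prop) (delta : X -> U -> Y -> X -> Prop)
  (l : nat) (w : Z -> option Y) : Prop :=
  (forall k, k < 0 -> w k = None) /\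
  (forall k, 0 <= k -> exists y, w k = Some y) /\
  (exists w', behavior X0 delta w' /\
     restr w (- Z.of_nat l) 0 = restr w' (- Z.of_nat l) 0) /\
  (forall k : nat, Pi (S l) (behavior X0 delta)
                     (restr w (Z.of_nat k - Z.of_nat l) (Z.of_nat k))).

Definition Eab {X U Y : Type} (X0 : X -> Prop) (delta : X -> U -> Y -> X -> Prop)
  (a b : Z) (x : X) (zeta : list (option Y)) : Prop :=
  exists (w : Z -> option Y) (xs : Z -> option X) (k : nat),
    behavior_S X0 delta w xs /\ xs (Z.of_nat k) = Some x /\
    zeta = restr w (Z.of_nat k + a) (Z.of_nat k + b).

Definition EI {X U Y : Type} (X0 : X -> Prop) (delta : X -> U -> Y -> X -> Prop)
  (l : nat) (x : X) : list (option Y) -> Prop :=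
  Eab X0 delta 0 (Z.of_nat l - 1) x.

(* Quotient state machine \hat Q^{l triangledown}: states are sets of strings. *)
Definition qX {X U Y : Type} (X0 : X -> Prop) (delta : X -> U -> Y -> X -> Prop)
  (l : nat) (S : list (option Y) -> Prop) : Prop :=
  exists x, S = EI X0 delta l x.
Definition qX0 {X U Y : Type} (X0 : X -> Prop) (delta : X -> U -> Y -> X -> Prop)
  (l : nat) (S : list (option Y) -> Prop) : Prop :=
  exists x, X0 x /\ S = EI X0 delta l x.
Definition qdelta {X U Y : Type} (X0 : X -> Prop) (delta : X -> U -> Y -> X -> Prop)
  (l : nat) (S : list (option Y) -> Prop) (u : U) (y : Y)
  (S' : list (option Y) -> Prop) : Prop :=
  exists x x', S = EI X0 delta l x /\ S' = EI X0 delta l x' /\ delta x u y x'.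

(* Domino consistency; zeta|_[0,l-1] of a string zeta is [firstn l zeta]. *)
Definition domino_consistent {X U Y : Type} (X0 : X -> Prop)
  (delta : X -> U -> Y -> X -> Prop) (l : nat) : Prop :=
  forall zeta, Pi (S l) (behavior X0 delta) zeta ->
  forall S, qX X0 delta l S -> S (firstn l zeta) ->
  exists x, EI X0 delta l x = S /\ Eab X0 delta 0 (Z.of_nat l) x zeta.

(* Main.v *)
Require Import Defs.
From Stdlib Require Import ZArith List Lia IndefiniteDescription.
Import ListNotations.
Open Scope Z_scope.

Definition wsig {Y} (nu : nat -> Y) : Z -> option Y :=
  fun z => if z <? 0 then None else Some (nu (Z.to_nat z)).
Definition ystr {Y} (nu : nat -> Y) (t m : nat) : list (option Y) :=
  map (fun i => Some (nu (t + i)%nat)) (seq 0 m).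
Definition Fut {X U Y} (X0 : X -> Prop) (delta : X -> U -> Y -> X -> Prop)
  (x : X) (m : nat) (s : list (option Y)) :=
  exists mu nu xi t, full_behavior X0 delta mu nu xi /\ xi t = x /\ s = ystr nu t m.
Definition step_ok {X U Y} (delta : X -> U -> Y -> X -> Prop) (mu : nat -> U) nu xi :=
  forall k, delta (xi k) (mu k) (nu k) (xi (S k)).

Lemma nth_map_seq {A} (f : nat -> A) n i d : (i < n)%nat -> nth i (map f (seq 0 n)) d = f i.
Proof.
  intro H. rewrite (nth_indep _ d (f 0%nat)) by (rewrite length_map, length_seq; lia).
  rewrite map_nth, seq_nth by lia. reflexivity.
Qed.

Lemma firstn_seq' m : forall s n, (m <= n)%nat -> firstn m (seq s n) = seq s m.
Proof.
  induction m; intros s n H; [reflexivity|].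
  destruct n; [lia|]. simpl. rewrite IHm by lia. reflexivity.
Qed.

Lemma firstn_ystr {Y} (nu : nat -> Y) t m n : (m <= n)%nat -> firstn m (ystr nu t n) = ystr nu t m.
Proof. intro H. unfold ystr. rewrite firstn_map, firstn_seq' by lia. reflexivity. Qed.

Lemma ystr_S {Y} (nu : nat -> Y) t m : ystr nu t (S m) = Some (nu t) :: ystr nu (S t) m.
Proof.
  unfold ystr. simpl. rewrite Nat.add_0_r. f_equal.
  rewrite <- seq_shift, map_map. apply map_ext. intro i. f_equal. f_equal. lia.
Qed.

Lemma ystr_eq {Y} (a b : nat -> Y) t t' m : ystr a t m = ystr b t' m ->
  forall i, (i < m)%nat -> a (t + i)%nat = b (t' + i)%nat.
Proof.
  intros H i Hi. apply (f_equal (fun L => nth i L None)) in H. unfold ystr in H.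
  rewrite !nth_map_seq in H by lia. congruence.
Qed.

Lemma restr_pt {A} (w w' : Z -> A) a b c d :
  Z.to_nat (b - a + 1) = Z.to_nat (d - c + 1) ->
  (forall i, (i < Z.to_nat (b - a + 1))%nat -> w (a + Z.of_nat i) = w' (c + Z.of_nat i)) ->
  restr w a b = restr w' c d.
Proof.
  intros H1 H2. unfold restr. rewrite <- H1. apply map_ext_in.
  intros i Hi. apply in_seq in Hi. apply H2. lia.
Qed.

Lemma restr_nth {A} (w w' : Z -> A) a b c d : restr w a b = restr w' c d ->
  forall i, (i < Z.to_nat (b - a + 1))%nat -> w (a + Z.of_nat i) = w' (c + Z.of_nat i).
Proof.
  intros H i Hi. assert (Hl := f_equal (@length _) H). unfold restr in Hl.
  rewrite !length_map, !length_seq in Hl.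
  destruct (Z.to_nat (b - a + 1)) eqn:E; [lia|].
  apply (f_equal (fun L => nth i L (w a))) in H. unfold restr in H.
  rewrite E, <- Hl in H. rewrite !nth_map_seq in H by lia. exact H.
Qed.

Lemma wsig_nat {Y} (nu : nat -> Y) n : wsig nu (Z.of_nat n) = Some (nu n).
Proof. unfold wsig. destruct (Z.ltb_ge (Z.of_nat n) 0) as [_ H]. rewrite H by lia. rewrite Nat2Z.id. reflexivity. Qed.

Lemma wsig_neg {Y} (nu : nat -> Y) z : z < 0 -> wsig nu z = None.
Proof. intro. unfold wsig. apply Z.ltb_lt in H. rewrite H. reflexivity. Qed.

Lemma behavior_wsig {X U Y} (X0 : X -> Prop) (delta : X -> U -> Y -> X -> Prop) mu nu xi :
  full_behavior X0 delta mu nu xi -> behavior X0 delta (wsig nu).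
Proof.
  intro H. exists mu, nu, xi. split; [exact H|]. intro k. split; intro Hk.
  - apply wsig_neg; exact Hk.
  - rewrite <- (Z2Nat.id k) at 1 by lia. apply wsig_nat.
Qed.

Lemma behavior_inv {X U Y} (X0 : X -> Prop) (delta : X -> U -> Y -> X -> Prop) w :
  behavior X0 delta w -> exists mu nu xi, full_behavior X0 delta mu nu xi /\ forall k, w k = wsig nu k.
Proof.
  intros (mu & nu & xi & Hf & Hw). exists mu, nu, xi. split; [exact Hf|]. intro k.
  destruct (Z.ltb_spec k 0).
  - rewrite wsig_neg by lia. apply Hw; lia.
  - unfold wsig. destruct (Z.ltb_ge k 0) as [_ H1]. rewrite H1 by lia. apply Hw; lia.
Qed.

Lemma E_Fut {X U Y} (X0 : X -> Prop) (delta : X -> U -> Y -> X -> Prop) m x s :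
  Eab X0 delta 0 (Z.of_nat m - 1) x s <-> Fut X0 delta x m s.
Proof.
  split.
  - intros (w & xs & k & (mu & nu & xi & Hf & Hw) & Hx & Hs).
    exists mu, nu, xi, k. split; [exact Hf|]. split.
    + destruct (Hw (Z.of_nat k)) as [_ H]. destruct H as [_ H]; [lia|].
      rewrite Nat2Z.id in H. congruence.
    + subst s. unfold restr, ystr.
      replace (Z.to_nat (Z.of_nat k + (Z.of_nat m - 1) - (Z.of_nat k + 0) + 1)) with m by lia.
      apply map_ext. intro i. replace (Z.of_nat k + 0 + Z.of_nat i) with (Z.of_nat (k + i)) by lia.
      destruct (Hw (Z.of_nat (k+i))) as [_ H]. destruct H as [H _]; [lia|].
      rewrite H, Nat2Z.id. reflexivity.
  - intros (mu & nu & xi & t & Hf & Hx & Hs).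
    exists (wsig nu), (wsig xi), t. split; [|split].
    + exists mu, nu, xi. split; [exact Hf|]. intro k. split; intro Hk.
      * rewrite !wsig_neg by lia. auto.
      * unfold wsig. rewrite (proj2 (Z.ltb_ge k 0)) by lia. auto.
    + rewrite wsig_nat. congruence.
    + subst s. unfold restr, ystr.
      replace (Z.to_nat (Z.of_nat t + (Z.of_nat m - 1) - (Z.of_nat t + 0) + 1)) with m by lia.
      apply map_ext. intro i. replace (Z.of_nat t + 0 + Z.of_nat i) with (Z.of_nat (t + i)) by lia.
      rewrite wsig_nat. reflexivity.
Qed.
Lemma glue {X U Y} (X0 : X -> Prop) (delta : X -> U -> Y -> X -> Prop) mu1 nu1 xi1 mu2 nu2 xi2 t :
  full_behavior X0 delta mu1 nu1 xi1 -> step_ok delta mu2 nu2 xi2 -> xi1 t = xi2 0%nat ->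
  exists mu nu xi, full_behavior X0 delta mu nu xi /\
    (forall i, nu (t + i)%nat = nu2 i) /\ (forall i, xi (t + i)%nat = xi2 i).
Proof.
  intros [H0 H1] H2 E.
  exists (fun i => if Nat.ltb i t then mu1 i else mu2 (i - t)%nat),
         (fun i => if Nat.ltb i t then nu1 i else nu2 (i - t)%nat),
         (fun i => if Nat.ltb i t then xi1 i else xi2 (i - t)%nat).
  split; [split|split].
  - destruct (Nat.ltb_spec 0 t); [exact H0|]. assert (t = 0%nat) by lia. subst t.
    simpl. rewrite <- E. exact H0.
  - intro k. destruct (Nat.ltb_spec k t); destruct (Nat.ltb_spec (S k) t).
    + apply H1.
    + replace (S k - t)%nat with 0%nat by lia. rewrite <- E. replace t with (S k) by lia. apply H1.
    + lia.
    + replace (S k - t)%nat with (S (k - t)) by lia. apply H2.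
  - intro i. destruct (Nat.ltb_spec (t+i) t); [lia|]. f_equal; lia.
  - intro i. destruct (Nat.ltb_spec (t+i) t); [lia|]. f_equal; lia.
Qed.

Lemma fb_step_ok {X U Y} (X0 : X -> Prop) (delta : X -> U -> Y -> X -> Prop) mu nu xi s :
  full_behavior X0 delta mu nu xi ->
  step_ok delta (fun i => mu (s + i)%nat) (fun i => nu (s + i)%nat) (fun i => xi (s + i)%nat).
Proof. intros [_ H] k. simpl. rewrite Nat.add_succ_r. apply H. Qed.

Lemma Fut_step {X U Y} (X0 : X -> Prop) (delta : X -> U -> Y -> X -> Prop) x u y x' m s :
  live_reachable X0 delta -> delta x u y x' -> Fut X0 delta x' m s ->
  Fut X0 delta x (S m) (Some y :: s).
Proof.
  intros [_ Hr] Hd (mu2 & nu2 & xi2 & t2 & Hf2 & Hx2 & Hs).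
  destruct (Hr x) as (mu1 & nu1 & xi1 & k & Hf1 & Hx1).
  destruct (glue X0 delta mu1 nu1 xi1
     (fun i => match i with O => u | S j => mu2 (t2 + j)%nat end)
     (fun i => match i with O => y | S j => nu2 (t2 + j)%nat end)
     (fun i => match i with O => x | S j => xi2 (t2 + j)%nat end) k Hf1)
    as (mu & nu & xi & Hf & Hnu & Hxi).
  - intros [|j]; simpl.
    + rewrite Nat.add_0_r, Hx2. exact Hd.
    + rewrite Nat.add_succ_r. apply Hf2.
  - exact Hx1.
  - exists mu, nu, xi, k. split; [exact Hf|]. split.
    + rewrite <- (Nat.add_0_r k), Hxi. reflexivity.
    + rewrite ystr_S. rewrite <- (Nat.add_0_r k) at 1. rewrite Hnu. f_equal.
      subst s. unfold ystr. apply map_ext. intro i. f_equal.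
      replace (S k + i)%nat with (k + S i)%nat by lia. rewrite Hnu. reflexivity.
Qed.

Lemma Fut_prefix {X U Y} (X0 : X -> Prop) (delta : X -> U -> Y -> X -> Prop) x n s m :
  Fut X0 delta x n s -> (m <= n)%nat -> Fut X0 delta x m (firstn m s).
Proof.
  intros (mu & nu & xi & t & Hf & Hx & Hs) Hm. exists mu, nu, xi, t.
  subst s. rewrite firstn_ystr by lia. auto.
Qed.

Lemma Fut_ext {X U Y} (X0 : X -> Prop) (delta : X -> U -> Y -> X -> Prop) x n s m :
  Fut X0 delta x m s -> (m <= n)%nat -> exists s', Fut X0 delta x n s' /\ firstn m s' = s.
Proof.
  intros (mu & nu & xi & t & Hf & Hx & Hs) Hm. exists (ystr nu t n). split.
  - exists mu, nu, xi, t. auto.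
  - subst s. apply firstn_ystr. lia.
Qed.

Lemma Fut0 {X U Y} (X0 : X -> Prop) (delta : X -> U -> Y -> X -> Prop) x :
  live_reachable X0 delta -> Fut X0 delta x 0 [].
Proof.
  intros [_ Hr]. destruct (Hr x) as (mu & nu & xi & k & Hf & Hx).
  exists mu, nu, xi, k. auto.
Qed.

Lemma Fut_init {X U Y} (X0 : X -> Prop) (delta : X -> U -> Y -> X -> Prop) x m s :
  X0 x -> Fut X0 delta x m s ->
  exists mu nu xi, full_behavior X0 delta mu nu xi /\ xi 0%nat = x /\ s = ystr nu 0 m.
Proof.
  intros H0 (mu & nu & xi & t & Hf & Hx & Hs).
  exists (fun i => mu (t + i)%nat), (fun i => nu (t + i)%nat), (fun i => xi (t + i)%nat).
  split; [split|split].
  - rewrite Nat.add_0_r, Hx. exact H0.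
  - apply (fb_step_ok X0 delta mu nu xi t Hf).
  - rewrite Nat.add_0_r. exact Hx.
  - subst s. reflexivity.
Qed.

Lemma Fut_cons_inv {X U Y} (X0 : X -> Prop) (delta : X -> U -> Y -> X -> Prop) x m y s :
  Fut X0 delta x (S m) (Some y :: s) ->
  exists u x', delta x u y x' /\ Fut X0 delta x' m s.
Proof.
  intros (mu & nu & xi & t & Hf & Hx & Hs). rewrite ystr_S in Hs. injection Hs as E1 E2.
  exists (mu t), (xi (S t)). split.
  - subst. apply Hf.
  - exists mu, nu, xi, (S t). auto.
Qed.

Lemma dep_choice {A : Type} (P : nat -> A -> Prop) (R : nat -> A -> A -> Prop) :
  (exists a, P 0%nat a) -> (forall n a, P n a -> exists b, R n a b /\ P (S n) b) ->
  exists f : nat -> A, P 0%nat (f 0%nat) /\ forall n, R n (f n) (f (S n)).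
Proof.
  intros [a0 H0] Hs.
  pose (st := fun n (p : {a | P n a}) =>
     constructive_indefinite_description _ (Hs n (proj1_sig p) (proj2_sig p))).
  pose (g := fix g n : {a | P n a} :=
     match n as n0 return {a | P n0 a} with
     | O => exist _ a0 H0
     | S n' => let q := st n' (g n') in exist _ (proj1_sig q) (proj2 (proj2_sig q)) end).
  exists (fun n => proj1_sig (g n)). split.
  - exact H0.
  - intro n. change (proj1_sig (g (S n))) with (proj1_sig (st n (g n))).
    exact (proj1 (proj2_sig (st n (g n)))).
Qed.

Lemma choice_nat {A : Type} (P : nat -> A -> Prop) :
  (forall n, exists a, P n a) -> exists f, forall n, P n (f n).
Proof.
  intro H. exists (fun n => proj1_sig (constructive_indefinite_description _ (H n))).
  intro n. apply proj2_sig.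
Qed.

Lemma EI_Fut {X U Y} (X0 : X -> Prop) (delta : X -> U -> Y -> X -> Prop) l x s :
  EI X0 delta l x s <-> Fut X0 delta x l s.
Proof. unfold EI. apply E_Fut. Qed.

Lemma dir1 {X U Y} (X0 : X -> Prop) (delta : X -> U -> Y -> X -> Prop) l w :
  live_reachable X0 delta -> (1 <= l)%nat ->
  behavior (qX0 X0 delta l) (qdelta X0 delta l) w -> SAlCA X0 delta l w.
Proof.
  intros Hlr Hl (mu & nu & xi & [H0 Hst] & Hw).
  assert (C : forall m, (m <= l)%nat -> forall j x, xi j = EI X0 delta l x ->
             Fut X0 delta x m (ystr nu j m)).
  { induction m; intros Hm j x Ex.
    - apply Fut0; exact Hlr.
    - destruct (Hst j) as (xj & xj' & E1 & E2 & Hd).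
      pose proof (IHm ltac:(lia) (S j) xj' E2) as F.
      pose proof (Fut_step X0 delta _ _ _ _ _ _ Hlr Hd F) as F2.
      rewrite <- ystr_S in F2.
      destruct (Fut_ext X0 delta _ l _ _ F2 Hm) as (s' & F3 & F4).
      apply EI_Fut in F3. rewrite <- E1, Ex in F3. apply EI_Fut in F3.
      rewrite <- F4. apply (Fut_prefix X0 delta _ l); auto. }
  assert (C2 : forall j, exists x, Fut X0 delta x (S l) (ystr nu j (S l))).
  { intro j. destruct (Hst j) as (xj & xj' & E1 & E2 & Hd). exists xj.
    rewrite ystr_S. eapply Fut_step; [exact Hlr|exact Hd|]. apply C; auto. }
  destruct H0 as (x0 & Hx0 & E0).
  destruct (Fut_init X0 delta _ _ _ Hx0 (C l (le_n _) 0%nat x0 E0))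
    as (mu0 & nu0 & xi0 & Hf0 & Hxi0 & Hs0).
  pose proof (ystr_eq _ _ _ _ _ Hs0) as Heq. simpl in Heq.
  assert (Hwn : forall n, w (Z.of_nat n) = Some (nu n)).
  { intro n. destruct (Hw (Z.of_nat n)) as [_ H]. rewrite H by lia. rewrite Nat2Z.id. reflexivity. }
  assert (Ag : forall z, z < Z.of_nat l -> w z = wsig nu0 z).
  { intros z Hz. destruct (Z.ltb_spec z 0).
    - rewrite wsig_neg by lia. apply Hw; lia.
    - rewrite <- (Z2Nat.id z) by lia. rewrite Hwn, wsig_nat. rewrite Heq by lia. reflexivity. }
  split; [|split; [|split]].
  - intros k Hk. apply Hw; lia.
  - intros k Hk. exists (nu (Z.to_nat k)). apply Hw; lia.
  - exists (wsig nu0). split; [eapply behavior_wsig; eauto|].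
    apply restr_pt; [reflexivity|]. intros i Hi. apply Ag. lia.
  - intro k. destruct (Nat.ltb_spec k l).
    + exists (wsig nu0), k. split; [eapply behavior_wsig; eauto|].
      replace (Z.of_nat k - Z.of_nat (S l) + 1) with (Z.of_nat k - Z.of_nat l) by lia.
      apply restr_pt; [reflexivity|]. intros i Hi. apply Ag. lia.
    + destruct (C2 (k - l)%nat) as (x & mu1 & nu1 & xi1 & t & Hf1 & _ & Hs1).
      pose proof (ystr_eq _ _ _ _ _ Hs1) as Heq1.
      exists (wsig nu1), (t + l)%nat. split; [eapply behavior_wsig; eauto|].
      apply restr_pt.
      * f_equal. lia.
      * intros i Hi.
        replace (Z.of_nat k - Z.of_nat l + Z.of_nat i) with (Z.of_nat (k - l + i)) by lia.
        replace (Z.of_nat (t + l) - Z.of_nat (S l) + 1 + Z.of_nat i) with (Z.of_nat (t + i)) by lia.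
        rewrite Hwn, wsig_nat, Heq1 by lia. reflexivity.
Qed.

Lemma dir2 {X U Y} (X0 : X -> Prop) (delta : X -> U -> Y -> X -> Prop) l w :
  (1 <= l)%nat -> domino_consistent X0 delta l ->
  SAlCA X0 delta l w -> behavior (qX0 X0 delta l) (qdelta X0 delta l) w.
Proof.
  intros Hl Hdom (Hneg & Hpos & _ & Hwin).
  destruct (choice_nat (fun n y => w (Z.of_nat n) = Some y)) as [yf Hyf].
  { intro n. apply Hpos. lia. }
  assert (Hwy : forall n, Pi (S l) (behavior X0 delta) (ystr yf n (S l))).
  { intro n. pose proof (Hwin (n + l)%nat) as H.
    replace (ystr yf n (S l)) with (restr w (Z.of_nat (n + l) - Z.of_nat l) (Z.of_nat (n + l))).
    exact H. unfold restr, ystr.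
    replace (Z.to_nat (Z.of_nat (n + l) - (Z.of_nat (n + l) - Z.of_nat l) + 1)) with (S l) by lia.
    apply map_ext. intro i.
    replace (Z.of_nat (n + l) - Z.of_nat l + Z.of_nat i) with (Z.of_nat (n + i)) by lia.
    apply Hyf. }
  set (P := fun n (S : list (option Y) -> Prop) =>
        (n = 0%nat -> qX0 X0 delta l S) /\ qX X0 delta l S /\ S (ystr yf n l)).
  set (R := fun n (S S' : list (option Y) -> Prop) => exists u, qdelta X0 delta l S u (yf n) S').
  destruct (dep_choice P R) as (f & Hf0 & Hf).
  -
    destruct (Hwin (l - 1)%nat) as (w' & k' & Bw' & Heqw).
    destruct (behavior_inv X0 delta w' Bw') as (mu' & nu' & xi' & Hf' & Hw').
    pose proof (restr_nth _ _ _ _ _ _ Heqw) as Hn.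
    assert (Hlen : Z.to_nat (Z.of_nat (l - 1) - (Z.of_nat (l - 1) - Z.of_nat l) + 1) = S l) by lia.
    rewrite Hlen in Hn.
    pose proof (Hn 0%nat ltac:(lia)) as N0. pose proof (Hn 1%nat ltac:(lia)) as N1.
    rewrite Hw' in N0, N1.
    rewrite Hneg in N0 by lia.
    replace (Z.of_nat (l - 1) - Z.of_nat l + Z.of_nat 1) with (Z.of_nat 0) in N1 by lia.
    rewrite Hyf in N1.
    assert (Hk : Z.of_nat k' = Z.of_nat l - 1).
    { unfold wsig in N0, N1.
      destruct (Z.ltb_spec (Z.of_nat k' - Z.of_nat (S l) + 1 + Z.of_nat 0) 0); [|discriminate].
      destruct (Z.ltb_spec (Z.of_nat k' - Z.of_nat (S l) + 1 + Z.of_nat 1) 0); [discriminate|].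
      lia. }
    exists (EI X0 delta l (xi' 0%nat)). split; [|split].
    + intros _. exists (xi' 0%nat). split; [apply Hf'|reflexivity].
    + exists (xi' 0%nat). reflexivity.
    + apply EI_Fut. exists mu', nu', xi', 0%nat. split; [exact Hf'|split; [reflexivity|]].
      unfold ystr. apply map_ext_in. intros j Hj. apply in_seq in Hj. simpl.
      pose proof (Hn (S j) ltac:(lia)) as Nj. rewrite Hw' in Nj.
      replace (Z.of_nat (l - 1) - Z.of_nat l + Z.of_nat (S j)) with (Z.of_nat j) in Nj by lia.
      replace (Z.of_nat k' - Z.of_nat (S l) + 1 + Z.of_nat (S j)) with (Z.of_nat j) in Nj by lia.
      rewrite Hyf, wsig_nat in Nj. exact Nj.
  - intros n St (_ & HqX & HS).
    pose proof (Hwy n) as Hz.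
    assert (HS' : St (firstn l (ystr yf n (S l)))) by (rewrite firstn_ystr by lia; exact HS).
    destruct (Hdom _ Hz St HqX HS') as (x & Ex & Hab).
    replace (Z.of_nat l) with (Z.of_nat (S l) - 1) in Hab by lia.
    apply E_Fut in Hab. rewrite ystr_S in Hab.
    destruct (Fut_cons_inv X0 delta _ _ _ _ Hab) as (u & x' & Hd & F').
    exists (EI X0 delta l x'). split.
    + exists u, x, x'. auto.
    + split; [discriminate|]. split; [exists x'; reflexivity|]. apply EI_Fut. exact F'.
  - destruct (choice_nat (fun n u => qdelta X0 delta l (f n) u (yf n) (f (S n)))) as [mu Hmu].
    { intro n. apply Hf. }
    exists mu, yf, f. split; [split; [apply Hf0; reflexivity|exact Hmu]|].
    intro k. split; intro Hk.
    + apply Hneg; exact Hk.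
    + rewrite <- (Z2Nat.id k) at 1 by lia. apply Hyf.
Qed.

Theorem corollary10 (X U Y : Type) (X0 : X -> Prop)
  (delta : X -> U -> Y -> X -> Prop) (l : nat)
  (HYfin : exists ys : list Y, forall y : Y, In y ys)
  (Hlr : live_reachable X0 delta)
  (Hstd : standing_delta delta)
  (Hl : (1 <= l)%nat)
  (Hdom : domino_consistent X0 delta l) :
  forall w : Z -> option Y,
    behavior (qX0 X0 delta l) (qdelta X0 delta l) w <-> SAlCA X0 delta l w.
Proof.
  intro w. split.
  - apply dir1; auto.
  - apply dir2; auto.
Qed.
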